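(* Consider problem (P) and suppose Assumptions A and B hold. Let $\{(x^t,L_g^t)\}$ be generated by SCP$_{ls}$ and let $\Omega$ be the set of accumulation points of $\{(x^{t+1},x^t,L_g^t)\}$. Then $\Omega\neq\emptyset$ and $\bar F\equiv\bar F^*$ on $\Omega$, where $\bar F^*:=\lim_{t\to\infty}\bar F(x^{t+1},x^t,L_g^t)$ (this limit exists and is finite).
   Context: Problem (P): $\min_{x\in\mathbb R^n}F(x):=f(x)+P_1(x)-P_2(x)+\delta_{\{g\le 0\}}(x)$, where $f:\mathbb R^n\to\mathbb R$ is continuously differentiable, $P_1,P_2:\mathbb R^n\to\mathbb R$ are convex and continuous, $g=(g_1,\dots,g_m):\mathbb R^n\to\mathbb R^m$ is continuous with $\{x:g(x)\le0\}\neq\emptyset$ (componentwise inequalities), $\delta_C$ the indicator function of $C$. Assumption A: (i) $\nabla f$ is Lipschitz with modulus $L_f$; (ii) each $g_i$ is differentiable with $\nabla g_i$ Lipschitz with modulus $L_{g_i}$; (iii) $F$ is level-bounded. Assumption B (MFCQ): each $g_i$ is continuously differentiable and for every $x$ with $g(x)\le0$ there is $d$ with $\langle\nabla g_i(x),d\rangle<0$ for all $i\in I(x):=\{j:g_j(x)=0\}$. $\bar G(x,y,w)\in\mathbb R^m$ ($x,y\in\mathbb R^n,w\in\mathbb R^m$) has components $\bar G_i(x,y,w)=g_i(y)+\langle\nabla g_i(y),x-y\rangle+\frac{w_i}{2}\|x-y\|^2$, and $\bar F(x,y,w):=f(x)+P_1(x)-P_2(x)+\delta_{\{\bar G\le0\}}(x,y,w)$.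 Algorithm SCP$_{ls}$: fix $c>0$, $0<\underline L<\bar L$, $\tau>1$ and $x^0$ with $g(x^0)\le0$. For $t=0,1,2,\dots$: (1) pick any $\xi^t\in\partial P_2(x^t)$; (2) choose $L_f^{t,0}\in[\underline L,\bar L]$, $L_g^{t,0}\in[\underline L,\bar L]^m$ arbitrarily, set $\tilde L_f=L_f^{t,0}$, $\tilde L_g=L_g^{t,0}$; (3) compute $\tilde x$ solving: minimize $\langle\nabla f(x^t)-\xi^t,x-x^t\rangle+\frac{\tilde L_f}{2}\|x-x^t\|^2+P_1(x)$ subject to $\bar G(x,x^t,\tilde L_g)\le0$. If $g(\tilde x)\le0$ and $F(\tilde x)\le F(x^t)-\frac c2\|\tilde x-x^t\|^2$, set $x^{t+1}=\tilde x$, $L_f^t=\tilde L_f$, $L_g^t=\tilde L_g$ and go to iteration $t+1$; otherwise, if $g(\tilde x)\not\le0$ replace $\tilde L_g$ by $\tau\tilde L_g$, while if $g(\tilde x)\le0$ but the decrease inequality fails replace $\tilde L_f$ by $\tau\tilde L_f$, and repeat step (3). *)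

(* Defs.v *)
From Stdlib Require Import Reals Lra ClassicalEpsilon.
From Stdlib Require Fin.
Open Scope R_scope.

Definition Vec (n : nat) := Fin.t n -> R.

Fixpoint sumF (n : nat) : (Fin.t n -> R) -> R :=
  match n return (Fin.t n -> R) -> R with
  | O => fun _ => 0
  | S k => fun v => v Fin.F1 + sumF k (fun i => v (Fin.FS i))
  end.

Definition inner {n} (x y : Vec n) : R := sumF n (fun i => x i * y i).
Definition vnorm {n} (x : Vec n) : R := sqrt (inner x x).
Definition vadd {n} (x y : Vec n) : Vec n := fun i => x i + y i.
Definition vsub {n} (x y : Vec n) : Vec n := fun i => x i - y i.
Definition vscale {n} (a : R) (x : Vec n) : Vec n := fun i => a * x i.

Definition is_gradient {n} (f : Vec n -> R) (gf : Vec n -> Vec n) : Prop :=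
  forall x eps, 0 < eps -> exists delta, 0 < delta /\
    forall h, vnorm h < delta ->
      Rabs (f (vadd x h) - f x - inner (gf x) h) <= eps * vnorm h.

Definition lipschitz {n k} (G : Vec n -> Vec k) (L : R) : Prop :=
  forall x y, vnorm (vsub (G x) (G y)) <= L * vnorm (vsub x y).

Definition continuous_fun {n} (h : Vec n -> R) : Prop :=
  forall x eps, 0 < eps -> exists delta, 0 < delta /\
    forall y, vnorm (vsub y x) < delta -> Rabs (h y - h x) < eps.

Definition convex_fun {n} (h : Vec n -> R) : Prop :=
  forall x y lam, 0 <= lam <= 1 ->
    h (vadd (vscale lam x) (vscale (1 - lam) y)) <= lam * h x + (1 - lam) * h y.

Definition subgrad {n} (h : Vec n -> R) (x xi : Vec n) : Prop :=
  forall y, h y >= h x + inner xi (vsub y x).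

Definition feasible {n m} (g : Fin.t m -> Vec n -> R) (x : Vec n) : Prop :=
  forall i, g i x <= 0.

(* level-boundedness of F = f + P1 - P2 + indicator{g <= 0} *)
Definition level_bounded {n m} (f P1 P2 : Vec n -> R) (g : Fin.t m -> Vec n -> R) : Prop :=
  forall alpha, exists M, forall x, feasible g x -> f x + P1 x - P2 x <= alpha -> vnorm x <= M.

Definition active {n m} (g : Fin.t m -> Vec n -> R) (x : Vec n) (i : Fin.t m) : Prop :=
  g i x = 0.

Definition MFCQ {n m} (g : Fin.t m -> Vec n -> R) (gg : Fin.t m -> Vec n -> Vec n) : Prop :=
  forall x, feasible g x -> exists d, forall i, active g x i -> inner (gg i x) d < 0.

Definition Gbar {n m} (g : Fin.t m -> Vec n -> R) (gg : Fin.t m -> Vec n -> Vec n)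
  (x y : Vec n) (w : Vec m) (i : Fin.t m) : R :=
  g i y + inner (gg i y) (vsub x y) + w i / 2 * (vnorm (vsub x y)) ^ 2.

(* extended reals for functions with an indicator term *)
Inductive ER := Fin (r : R) | PInf.

Definition Fbar {n m} (f P1 P2 : Vec n -> R) (g : Fin.t m -> Vec n -> R)
  (gg : Fin.t m -> Vec n -> Vec n) (x y : Vec n) (w : Vec m) : ER :=
  match excluded_middle_informative (forall i, Gbar g gg x y w i <= 0) with
  | left _ => Fin (f x + P1 x - P2 x)
  | right _ => PInf
  end.

Definition subproblem_solution {n m} (gf : Vec n -> Vec n) (P1 : Vec n -> R)
  (g : Fin.t m -> Vec n -> R) (gg : Fin.t m -> Vec n -> Vec n)
  (xcur xi : Vec n) (Lf : R) (Lg : Vec m) (xt : Vec n) : Prop :=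
  let obj := fun x => inner (vsub (gf xcur) xi) (vsub x xcur)
                      + Lf / 2 * (vnorm (vsub x xcur)) ^ 2 + P1 x in
  (forall i, Gbar g gg xt xcur Lg i <= 0) /\
  (forall y, (forall i, Gbar g gg y xcur Lg i <= 0) -> obj xt <= obj y).

Definition scp_ls_step {n m} (f : Vec n -> R) (gf : Vec n -> Vec n) (P1 P2 : Vec n -> R)
  (g : Fin.t m -> Vec n -> R) (gg : Fin.t m -> Vec n -> Vec n)
  (c Lund Lbar tau : R) (xcur xnext : Vec n) (Lft : R) (Lgt : Vec m) : Prop :=
  let F0 := fun x => f x + P1 x - P2 x in
  exists xi, subgrad P2 xcur xi /\
  exists (K : nat) (LF : nat -> R) (LG : nat -> Vec m) (XT : nat -> Vec n),
    Lund <= LF O <= Lbar /\ (forall i, Lund <= LG O i <= Lbar) /\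
    (forall j, (j <= K)%nat -> subproblem_solution gf P1 g gg xcur xi (LF j) (LG j) (XT j)) /\
    (forall j, (j < K)%nat ->
       (~ feasible g (XT j) /\ (forall i, LG (S j) i = tau * LG j i) /\ LF (S j) = LF j)
       \/
       (feasible g (XT j) /\
        ~ (F0 (XT j) <= F0 xcur - c / 2 * (vnorm (vsub (XT j) xcur)) ^ 2) /\
        LF (S j) = tau * LF j /\ (forall i, LG (S j) i = LG j i))) /\
    feasible g (XT K) /\
    F0 (XT K) <= F0 xcur - c / 2 * (vnorm (vsub (XT K) xcur)) ^ 2 /\
    xnext = XT K /\ Lft = LF K /\ (forall i, Lgt i = LG K i).

Definition scp_ls_generated {n m} (f : Vec n -> R) (gf : Vec n -> Vec n) (P1 P2 : Vec n -> R)
  (g : Fin.t m -> Vec n -> R) (gg : Fin.t m -> Vec n -> Vec n)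
  (c Lund Lbar tau : R) (x0 : Vec n)
  (x : nat -> Vec n) (Lf : nat -> R) (Lg : nat -> Vec m) : Prop :=
  x O = x0 /\
  forall t, scp_ls_step f gf P1 P2 g gg c Lund Lbar tau (x t) (x (S t)) (Lf t) (Lg t).

Definition is_accum_point {n m} (x : nat -> Vec n) (Lg : nat -> Vec m)
  (a b : Vec n) (w : Vec m) : Prop :=
  forall eps N, 0 < eps -> exists t, (N <= t)%nat /\
    vnorm (vsub (x (S t)) a) < eps /\ vnorm (vsub (x t) b) < eps /\
    vnorm (vsub (Lg t) w) < eps.

(* Main.v *)
Require Import Defs.
From Stdlib Require Import Reals Lra Psatz FunctionalExtensionality Classical ClassicalEpsilon.
From Stdlib Require Fin.
Open Scope R_scope.

Lemma sumF_ext k (u v : Fin.t k -> R) : (forall i, u i = v i) -> sumF k u = sumF k v.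
Proof. induction k; simpl; intros; auto. rewrite H; f_equal; auto. Qed.

Lemma sumF_le k (u v : Fin.t k -> R) : (forall i, u i <= v i) -> sumF k u <= sumF k v.
Proof. induction k; simpl; intros. lra. specialize (IHk (fun i => u (Fin.FS i)) (fun i => v (Fin.FS i))). 
  assert (u Fin.F1 <= v Fin.F1) by auto. assert (sumF k (fun i => u (Fin.FS i)) <= sumF k (fun i => v (Fin.FS i))) by (apply IHk; auto). lra. Qed.

Lemma sumF_nonneg k (u : Fin.t k -> R) : (forall i, 0 <= u i) -> 0 <= sumF k u.
Proof. intros. replace 0 with (sumF k (fun _ => 0)). apply sumF_le; auto.
  clear; induction k; simpl; auto. rewrite IHk. ring. Qed.

Lemma sumF_term k (u : Fin.t k -> R) i : (forall i, 0 <= u i) -> u i <= sumF k u.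
Proof. revert u; induction i; intros; simpl.
  - assert (0 <= sumF n (fun i => u (Fin.FS i))) by (apply sumF_nonneg; auto). lra.
  - assert (u (Fin.FS i) <= sumF n (fun i => u (Fin.FS i))) by (apply (IHi (fun i => u (Fin.FS i))); auto).
    specialize (H Fin.F1). lra. Qed.

Lemma sumF_bound k (u : Fin.t k -> R) d : (forall i, u i <= d) -> sumF k u <= INR k * d.
Proof. revert u; induction k; intros. simpl; lra.
  rewrite S_INR; simpl.
  assert (sumF k (fun i => u (Fin.FS i)) <= INR k * d) by (apply IHk; auto).
  specialize (H Fin.F1). lra. Qed.

Lemma sumF_cv k (F : nat -> Fin.t k -> R) (l : Fin.t k -> R) :
  (forall i, Un_cv (fun j => F j i) (l i)) -> Un_cv (fun j => sumF k (F j)) (sumF k l).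
Proof. revert F l; induction k; intros; simpl.
  - intros e He; exists O; intros; unfold Rdist; rewrite Rminus_0_r, Rabs_R0; auto.
  - apply CV_plus. auto. apply (IHk (fun j i => F j (Fin.FS i)) (fun i => l (Fin.FS i))); auto. Qed.

Lemma inner_ge0 {k} (v : Vec k) : 0 <= inner v v.
Proof. unfold inner; apply sumF_nonneg; intros; nra. Qed.

Lemma vnorm_ge0 {k} (v : Vec k) : 0 <= vnorm v.
Proof. apply sqrt_pos. Qed.

Lemma vnorm_sq {k} (v : Vec k) : vnorm v ^ 2 = inner v v.
Proof. unfold vnorm; apply pow2_sqrt, inner_ge0. Qed.

Lemma coord_le_vnorm {k} (v : Vec k) i : Rabs (v i) <= vnorm v.
Proof. unfold vnorm. rewrite <- sqrt_Rsqr_abs. apply sqrt_le_1_alt.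
  unfold Rsqr, inner. apply (sumF_term k (fun i => v i * v i)). intros; nra. Qed.

Lemma vnorm_scale {k} a (v : Vec k) : vnorm (vscale a v) = Rabs a * vnorm v.
Proof. unfold vnorm. rewrite <- sqrt_Rsqr_abs, <- sqrt_mult_alt.
  f_equal. unfold inner, vscale. clear; induction k; simpl. ring.
  rewrite (IHk (fun i => v (Fin.FS i))). unfold Rsqr; ring.
  apply Rle_0_sqr. Qed.

Lemma inner_sq_le k (u v : Vec k) : (inner u v)^2 <= inner u u * inner v v.
Proof. unfold inner; revert u v; induction k; intros; simpl. lra.
  specialize (IHk (fun i => u (Fin.FS i)) (fun i => v (Fin.FS i))).
  set (x := u Fin.F1) in *. set (y := v Fin.F1) in *.
  set (S := sumF k (fun i => u (Fin.FS i) * v (Fin.FS i))) in *.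
  set (U := sumF k (fun i => u (Fin.FS i) * u (Fin.FS i))) in *.
  set (V := sumF k (fun i => v (Fin.FS i) * v (Fin.FS i))) in *.
  assert (0 <= U) by (apply sumF_nonneg; intros; nra).
  assert (0 <= V) by (apply sumF_nonneg; intros; nra).
  assert (H2: 2*x*y*S <= x*x*V + y*y*U).
  { destruct (Req_dec U 0) as [HU0|HU].
    - rewrite HU0 in *. assert (S*S <= 0) by nra. assert (S = 0) by nra. rewrite H2. nra.
    - assert (U*(x*x*V+y*y*U-2*x*y*S) >= 0).
      { assert (0 <= (x*S - y*U)^2) by apply pow2_ge_0.
        assert (0 <= x*x*(U*V-S*S)) by (apply Rmult_le_pos; nra).
        nra. }
      assert (0 < U) by lra. nra. }
  nra. Qed.

Lemma cauchy_schwarz {k} (u v : Vec k) : inner u v <= vnorm u * vnorm v.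
Proof. unfold vnorm. rewrite <- sqrt_mult_alt by apply inner_ge0.
  apply Rle_trans with (Rabs (inner u v)). apply RRle_abs.
  rewrite <- sqrt_Rsqr_abs. apply sqrt_le_1_alt. unfold Rsqr. 
  pose proof (inner_sq_le k u v). simpl in H. lra. Qed.

Lemma inner_scale_r {k} (u v : Vec k) a : inner u (vscale a v) = a * inner u v.
Proof. unfold inner, vscale; revert u v; induction k; intros; simpl. ring.
  rewrite (IHk (fun i => u (Fin.FS i)) (fun i => v (Fin.FS i))). ring. Qed.

Lemma inner_sub_l {k} (u u' v : Vec k) : inner (vsub u u') v = inner u v - inner u' v.
Proof. unfold inner, vsub; revert u u' v; induction k; intros; simpl. ring.
  rewrite (IHk (fun i => u (Fin.FS i)) (fun i => u' (Fin.FS i)) (fun i => v (Fin.FS i))). ring. Qed.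


Lemma Rabs_le_inv' x a : Rabs x <= a -> -a <= x <= a.
Proof. unfold Rabs; destruct (Rcase_abs x); lra. Qed.

Definition ccv {k} (u : nat -> Vec k) (a : Vec k) : Prop :=
  forall i, Un_cv (fun j => u j i) (a i).

Lemma cv_const c : Un_cv (fun _ => c) c.
Proof. intros e He; exists O; intros; unfold Rdist; rewrite Rminus_diag, Rabs_R0; auto. Qed.

Lemma ccv_sub {k} (u v : nat -> Vec k) a b : ccv u a -> ccv v b ->
  ccv (fun j => vsub (u j) (v j)) (vsub a b).
Proof. intros Hu Hv i; unfold vsub; apply CV_minus; auto. Qed.

Lemma ccv_const {k} (a : Vec k) : ccv (fun _ => a) a.
Proof. intros i; apply cv_const. Qed.

Lemma inner_ccv {k} (u v : nat -> Vec k) a b : ccv u a -> ccv v b ->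
  Un_cv (fun j => inner (u j) (v j)) (inner a b).
Proof. intros; unfold inner.
  apply (sumF_cv k (fun j i => u j i * v j i) (fun i => a i * b i)).
  intros; apply CV_mult; auto. Qed.

Lemma ccv_vnorm {k} (u : nat -> Vec k) a : ccv u a ->
  Un_cv (fun j => vnorm (vsub (u j) a)) 0.
Proof. intros H.
  assert (H1 := inner_ccv _ _ _ _ (ccv_sub u _ a a H (ccv_const a)) (ccv_sub u _ a a H (ccv_const a))).
  assert (E : inner (vsub a a) (vsub a a) = 0).
  { unfold inner, vsub. clear. induction k; simpl. auto. rewrite (IHk (fun i => a (Fin.FS i))). ring. }
  rewrite E in H1. rewrite <- sqrt_0. unfold vnorm.
  apply (continuity_seq sqrt (fun j => inner (vsub (u j) a) (vsub (u j) a)) 0).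
  apply continuity_pt_sqrt; lra. auto. Qed.

Lemma vnorm_ccv {k} (u : nat -> Vec k) a :
  Un_cv (fun j => vnorm (vsub (u j) a)) 0 -> ccv u a.
Proof. intros H i e He. destruct (H e He) as [N HN]. exists N; intros j Hj.
  specialize (HN j Hj). unfold Rdist in *. rewrite Rminus_0_r, Rabs_pos_eq in HN by apply vnorm_ge0.
  pose proof (coord_le_vnorm (vsub (u j) a) i). change (vsub (u j) a i) with (u j i - a i) in H0. cbv beta. lra. Qed.

Lemma cont_seq {k} (h : Vec k -> R) (u : nat -> Vec k) a :
  continuous_fun h -> ccv u a -> Un_cv (fun j => h (u j)) (h a).
Proof. intros Hh Hu e He. destruct (Hh a e He) as [d [Hd Hd']].
  destruct (ccv_vnorm u a Hu d Hd) as [N HN]. exists N; intros j Hj.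
  specialize (HN j Hj). unfold Rdist in *. rewrite Rminus_0_r, Rabs_pos_eq in HN by apply vnorm_ge0.
  apply Hd'; auto. Qed.

Lemma vadd_vsub {k} (a y : Vec k) : vadd a (vsub y a) = y.
Proof. apply functional_extensionality; intros; unfold vadd, vsub; ring. Qed.

Lemma grad_seq {k} (h : Vec k -> R) gh (u : nat -> Vec k) a :
  is_gradient h gh -> ccv u a -> Un_cv (fun j => h (u j)) (h a).
Proof. intros Hh Hu e He. destruct (Hh a 1 Rlt_0_1) as [d [Hd Hd']].
  assert (Hn := ccv_vnorm u a Hu).
  assert (Hi := inner_ccv _ _ _ _ (ccv_const (gh a)) (ccv_sub u _ a a Hu (ccv_const a))).
  assert (E : inner (gh a) (vsub a a) = 0).
  { generalize (gh a). intro v. unfold inner, vsub. clear. revert a v. induction k; simpl; intros. auto. rewrite (IHk (fun i => a (Fin.FS i)) (fun i => v (Fin.FS i))). ring. }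
  rewrite E in Hi.
  destruct (Hn (Rmin d (e/2))) as [N1 HN1]. apply Rmin_pos; lra.
  destruct (Hi (e/2)) as [N2 HN2]. lra.
  exists (max N1 N2); intros j Hj.
  specialize (HN1 j ltac:(lia)). specialize (HN2 j ltac:(lia)).
  unfold Rdist in *. rewrite Rminus_0_r in *. rewrite Rabs_pos_eq in HN1 by apply vnorm_ge0.
  assert (Hm1 := Rmin_l d (e/2)). assert (Hm2 := Rmin_r d (e/2)).
  specialize (Hd' (vsub (u j) a) ltac:(lra)). rewrite vadd_vsub in Hd'.
  revert Hd' HN2. generalize (inner (gh a) (vsub (u j) a)). intros r H1 H2.
  apply Rabs_def2 in H2. destruct H2. apply Rabs_def1; apply Rabs_le_inv' in H1; lra.
Qed.


Definition incr (phi : nat -> nat) := forall j, (phi j < phi (S j))%nat.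

Lemma incr_ge phi : incr phi -> forall j, (j <= phi j)%nat.
Proof. intros H j; induction j. lia. specialize (H j). lia. Qed.

Lemma incr_mono phi : incr phi -> forall j j', (j <= j')%nat -> (phi j <= phi j')%nat.
Proof. intros H j j' Hjj. induction Hjj. lia. specialize (H m). lia. Qed.

Lemma incr_comp phi psi : incr phi -> incr psi -> incr (fun j => phi (psi j)).
Proof. intros H1 H2 j. specialize (H2 j).
  assert (H3 : (phi (S (psi j)) <= phi (psi (S j)))%nat) by (apply incr_mono; auto).
  specialize (H1 (psi j)). lia. Qed.

Lemma cv_subseq (u : nat -> R) l phi : Un_cv u l -> incr phi -> Un_cv (fun j => u (phi j)) l.
Proof. intros H Hp e He. destruct (H e He) as [N HN]. exists N; intros j Hj.
  apply HN. pose proof (incr_ge phi Hp j). lia. Qed.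

Lemma ccv_subseq {k} (u : nat -> Vec k) l phi : ccv u l -> incr phi -> ccv (fun j => u (phi j)) l.
Proof. intros H Hp i. apply (cv_subseq (fun j => u j i)); auto. Qed.

Lemma inv_small e : 0 < e -> exists N, forall j, (N <= j)%nat -> / (INR j + 1) < e.
Proof. intros He. destruct (archimed_cor1 e He) as [N [H1 H2]]. exists N; intros j Hj.
  apply Rle_lt_trans with (/ INR N); auto. apply Rinv_le_contravar.
  apply lt_0_INR; auto. apply le_INR in Hj. lra. Qed.

Lemma inv_pos j : 0 < / (INR j + 1).
Proof. apply Rinv_0_lt_compat. pose proof (pos_INR j). lra. Qed.

Lemma build_sub (Q : R -> nat -> Prop) :
  (forall e N, 0 < e -> exists t, (N <= t)%nat /\ Q e t) ->
  exists s, incr s /\ forall j, Q (/ (INR j + 1)) (s j).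
Proof. intros H.
  assert (Hn : forall j N, { t | (N <= t)%nat /\ Q (/ (INR j + 1)) t }).
  { intros j N. apply constructive_indefinite_description. apply H. apply inv_pos. }
  set (s := fix s j := match j with O => proj1_sig (Hn O O) | S j' => proj1_sig (Hn (S j') (S (s j'))) end).
  exists s. split.
  - intros j. simpl. destruct (proj2_sig (Hn (S j) (S (s j)))) as [Ht _]. exact Ht.
  - intros [|j]; simpl. apply (proj2_sig (Hn O O)).
    apply (proj2_sig (Hn (S j) (S (s j)))). Qed.

Lemma cv_of_inv (v : nat -> R) l : (forall j, Rabs (v j - l) < / (INR j + 1)) -> Un_cv v l.
Proof. intros H e He. destruct (inv_small e He) as [N HN]. exists N; intros j Hj.
  unfold Rdist. specialize (HN j Hj). specialize (H j). lra. Qed.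

Lemma BW1 (u : nat -> R) M : (forall j, Rabs (u j) <= M) ->
  exists phi l, incr phi /\ Un_cv (fun j => u (phi j)) l.
Proof. intros HM.
  destruct (Bolzano_Weierstrass u (fun c => -M <= c <= M) (compact_P3 (-M) M)) as [l Hl].
  { intros j. apply Rabs_le_inv'; auto. }
  destruct (build_sub (fun e t => Rabs (u t - l) < e)) as [s [Hs1 Hs2]].
  { intros e N He. destruct (Hl (disc l (mkposreal e He)) N) as [p [Hp1 Hp2]].
    exists (mkposreal e He); intros y Hy; auto.
    exists p; split; auto. }
  exists s, l; split; auto. apply cv_of_inv; auto. Qed.

Lemma BWk k (u : nat -> Vec k) M : (forall j i, Rabs (u j i) <= M) ->
  exists phi l, incr phi /\ ccv (fun j => u (phi j)) l.
Proof. revert u; induction k; intros u HM.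
  - exists (fun j => j), (fun _ => 0). split. intros j; lia. intros i; inversion i.
  - destruct (BW1 (fun j => u j Fin.F1) M) as [phi1 [l1 [Hp1 Hc1]]]. auto.
    destruct (IHk (fun j i => u (phi1 j) (Fin.FS i))) as [phi2 [l2 [Hp2 Hc2]]]. auto.
    exists (fun j => phi1 (phi2 j)), (fun i => Fin.caseS' i (fun _ => R) l1 (fun p => l2 p)).
    split. apply incr_comp; auto.
    intros i. pattern i. apply Fin.caseS'; simpl.
    + apply (cv_subseq (fun j => u (phi1 j) Fin.F1)); auto.
    + intros p. apply Hc2. Qed.


Lemma line_deriv {k} (h : Vec k -> R) gh x d s : is_gradient h gh ->
  derivable_pt_lim (fun s => h (vadd x (vscale s d))) s (inner (gh (vadd x (vscale s d))) d).
Proof. intros Hg eps He.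
  set (z := vadd x (vscale s d)).
  assert (Hd0 := vnorm_ge0 d).
  destruct (Hg z (eps / (vnorm d + 1))) as [d0 [Hd0p Hd0']].
  { apply Rdiv_lt_0_compat; lra. }
  assert (Hdp : 0 < d0 / (vnorm d + 1)) by (apply Rdiv_lt_0_compat; lra).
  exists (mkposreal _ Hdp). intros hh Hh0 Hhh. simpl in Hhh.
  assert (E : vadd x (vscale (s + hh) d) = vadd z (vscale hh d)).
  { apply functional_extensionality; intros; unfold z, vadd, vscale; ring. }
  rewrite E. fold z.
  assert (Hn : vnorm (vscale hh d) < d0).
  { rewrite vnorm_scale. apply Rle_lt_trans with (Rabs hh * (vnorm d + 1)).
    apply Rmult_le_compat_l. apply Rabs_pos. lra.
    apply (Rmult_lt_compat_r (vnorm d + 1)) in Hhh; [|lra].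
    unfold Rdiv in Hhh. rewrite Rmult_assoc, Rinv_l in Hhh by lra. lra. }
  specialize (Hd0' _ Hn). rewrite inner_scale_r, vnorm_scale in Hd0'.
  revert Hd0'. generalize (h (vadd z (vscale hh d))) (h z) (inner (gh z) d). intros a b c H.
  assert (Hh : 0 < Rabs hh) by (apply Rabs_pos_lt; auto).
  replace ((a - b) / hh - c) with ((a - b - hh * c) / hh) by (field; auto).
  unfold Rdiv. rewrite Rabs_mult, Rabs_inv.
  apply Rle_lt_trans with (eps / (vnorm d + 1) * (Rabs hh * vnorm d) * / Rabs hh).
  apply Rmult_le_compat_r. left; apply Rinv_0_lt_compat; auto. auto.
  replace (eps / (vnorm d + 1) * (Rabs hh * vnorm d) * / Rabs hh) with (eps * (vnorm d / (vnorm d + 1))) by (field; lra).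
  assert (vnorm d / (vnorm d + 1) < 1).
  { apply (Rmult_lt_reg_r (vnorm d + 1)). lra. unfold Rdiv. rewrite Rmult_assoc, Rinv_l by lra. lra. }
  nra. Qed.

Lemma descent {k} (h : Vec k -> R) gh L : is_gradient h gh -> lipschitz gh L -> 0 <= L ->
  forall x y, h y <= h x + inner (gh x) (vsub y x) + L * vnorm (vsub y x) ^ 2.
Proof. intros Hg HL HL0 x y. set (d := vsub y x).
  destruct (MVT_cor2 (fun s => h (vadd x (vscale s d))) (fun s => inner (gh (vadd x (vscale s d))) d) 0 1 Rlt_0_1)
    as [c [Hc1 Hc2]].
  { intros; apply line_deriv; auto. }
  assert (E1 : vadd x (vscale 1 d) = y).
  { apply functional_extensionality; intros; unfold d, vadd, vscale, vsub; ring. }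
  assert (E0 : vadd x (vscale 0 d) = x).
  { apply functional_extensionality; intros; unfold d, vadd, vscale, vsub; ring. }
  rewrite E1, E0 in Hc1.
  set (zc := vadd x (vscale c d)) in *.
  assert (Ez : vsub zc x = vscale c d).
  { apply functional_extensionality; intros; unfold zc, vadd, vscale, vsub; ring. }
  assert (H1 : inner (vsub (gh zc) (gh x)) d <= vnorm (vsub (gh zc) (gh x)) * vnorm d) by apply cauchy_schwarz.
  rewrite inner_sub_l in H1.
  assert (H2 := HL zc x). rewrite Ez, vnorm_scale, Rabs_pos_eq in H2 by lra.
  assert (Hd := vnorm_ge0 d).
  assert (H3 : vnorm (vsub (gh zc) (gh x)) * vnorm d <= L * (c * vnorm d) * vnorm d)
    by (apply Rmult_le_compat_r; auto).
  assert (L * (c * vnorm d) * vnorm d <= L * vnorm d ^ 2).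
  { replace (L * vnorm d ^2) with (L * (1 * vnorm d) * vnorm d) by ring.
    apply Rmult_le_compat_r; auto. apply Rmult_le_compat_l; auto. apply Rmult_le_compat_r; lra. }
  lra. Qed.


Lemma lip_max {k l} (G : Vec k -> Vec l) L : lipschitz G L -> lipschitz G (Rmax L 0).
Proof. intros H x y. eapply Rle_trans. apply H. apply Rmult_le_compat_r. apply vnorm_ge0. apply Rmax_l. Qed.

Lemma Gbar_w {n m} (g : Fin.t m -> Vec n -> R) gg a b (w w' : Vec m) i :
  w i = w' i -> Gbar g gg a b w i = Gbar g gg a b w' i.
Proof. intros H; unfold Gbar; rewrite H; auto. Qed.

Definition Bnd {m} (Lipg : Fin.t m -> R) Lund Lbar tau :=
  Lbar * Rmax 1 (tau * sumF m (fun i => 2 * Rmax (Lipg i) 0) / Lund).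

Lemma step_facts {n m} (f : Vec n -> R) gf P1 P2 (g : Fin.t m -> Vec n -> R) gg Lipg
  c Lund Lbar tau xc xn Lft Lgt :
  (forall i, is_gradient (g i) (gg i) /\ lipschitz (gg i) (Lipg i)) ->
  0 < c -> 0 < Lund -> 1 < tau ->
  scp_ls_step f gf P1 P2 g gg c Lund Lbar tau xc xn Lft Lgt ->
  feasible g xn /\ f xn + P1 xn - P2 xn <= f xc + P1 xc - P2 xc /\
  (forall i, Gbar g gg xn xc Lgt i <= 0) /\
  (forall i, Lund <= Lgt i <= Bnd Lipg Lund Lbar tau).
Proof. intros Hg Hc HL Ht Hs.
  destruct Hs as [xi [Hxi [K [LF [LG [XT [H0f [H0g [Hsub [Hls [Hfe [Hdec [Exn [ELf ELg]]]]]]]]]]]]]].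
  cbv zeta in *. subst xn.
  set (S2 := sumF m (fun i => 2 * Rmax (Lipg i) 0)).
  set (Q := Rmax 1 (tau * S2 / Lund)).
  assert (Inv : forall j, (j <= K)%nat -> exists k, (forall i, LG j i = tau ^ k * LG O i) /\ tau ^ k <= Q).
  { induction j; intros Hj.
    - exists O. split. intros; simpl; ring. simpl. apply Rmax_l.
    - destruct (IHj ltac:(lia)) as [k [Hk1 Hk2]].
      destruct (Hls j ltac:(lia)) as [[Hinf [HLG HLF]] | [Hfj [Hnd [HLF HLG]]]].
      + exists (S k). split. intros i; rewrite HLG, Hk1; simpl; ring.
        apply not_all_ex_not in Hinf. destruct Hinf as [i0 Hi0]. apply Rnot_le_lt in Hi0.
        destruct (Hsub j ltac:(lia)) as [HG _].
        specialize (HG i0). unfold Gbar in HG.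
        destruct (Hg i0) as [Hg1 Hg2].
        pose proof (descent (g i0) (gg i0) _ Hg1 (lip_max _ _ Hg2) (Rmax_r _ _) xc (XT j)) as HD.
        assert (Hlt : LG j i0 / 2 < Rmax (Lipg i0) 0).
        { destruct (Rlt_or_le (LG j i0 / 2) (Rmax (Lipg i0) 0)); auto.
          assert (Rmax (Lipg i0) 0 * vnorm (vsub (XT j) xc) ^ 2 <= LG j i0 / 2 * vnorm (vsub (XT j) xc) ^ 2).
          apply Rmult_le_compat_r; auto. apply pow2_ge_0. lra. }
        assert (HS : 2 * Rmax (Lipg i0) 0 <= S2).
        { apply (sumF_term m (fun i => 2 * Rmax (Lipg i) 0)). intros; pose proof (Rmax_r (Lipg i) 0); lra. }
        assert (Hk0 : 0 < tau ^ k) by (apply pow_lt; lra).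
        assert (Htk : tau ^ k * Lund < S2).
        { rewrite Hk1 in Hlt. destruct (H0g i0). nra. }
        apply Rle_trans with (tau * S2 / Lund); [|apply Rmax_r].
        simpl. unfold Rdiv. rewrite Rmult_assoc. apply Rmult_le_compat_l. lra.
        apply (Rmult_le_reg_r Lund); auto. rewrite Rmult_assoc, Rinv_l by lra. lra.
      + exists k. split; auto. intros i; rewrite HLG; auto. }
  destruct (Hsub K (le_n K)) as [HGK _].
  split; [auto|]. split.
  { assert (0 <= c / 2 * vnorm (vsub (XT K) xc) ^ 2).
    apply Rmult_le_pos. lra. apply pow2_ge_0. lra. }
  split.
  { intros i. rewrite (Gbar_w g gg _ _ Lgt (LG K) i (ELg i)). auto. }
  intros i. rewrite ELg. destruct (Inv K (le_n K)) as [k [Hk1 Hk2]]. rewrite Hk1.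
  assert (1 <= tau ^ k) by (apply pow_R1_Rle; lra).
  destruct (H0g i). unfold Bnd. fold S2. fold Q. split. nra.
  rewrite Rmult_comm. apply Rmult_le_compat; lra.
Qed.


Lemma cv_ext (u v : nat -> R) l : (forall j, u j = v j) -> Un_cv u l -> Un_cv v l.
Proof. intros E H e He. destruct (H e He) as [N HN]; exists N; intros; rewrite <- E; auto. Qed.

Lemma nvcv {k} (u : nat -> Vec k) a : (forall j, vnorm (vsub (u j) a) < / (INR j + 1)) -> ccv u a.
Proof. intros H; apply vnorm_ccv, cv_of_inv. intros j. rewrite Rminus_0_r, Rabs_pos_eq by apply vnorm_ge0. auto. Qed.

Lemma vcv_small {k} (u : nat -> Vec k) a e : ccv u a -> 0 < e -> exists N, forall j, (N <= j)%nat -> vnorm (vsub (u j) a) < e.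
Proof. intros H He. destruct (ccv_vnorm u a H e He) as [N HN]. exists N; intros j Hj.
  specialize (HN j Hj). unfold Rdist in HN. rewrite Rminus_0_r, Rabs_pos_eq in HN by apply vnorm_ge0. auto. Qed.

Lemma accum_sub {n m} (x : nat -> Vec n) (Lg : nat -> Vec m) a b w : is_accum_point x Lg a b w ->
  exists s, incr s /\ ccv (fun j => x (S (s j))) a /\ ccv (fun j => x (s j)) b /\ ccv (fun j => Lg (s j)) w.
Proof. intros H.
  destruct (build_sub (fun e t => vnorm (vsub (x (S t)) a) < e /\ vnorm (vsub (x t) b) < e /\ vnorm (vsub (Lg t) w) < e)) as [s [Hs1 Hs2]].
  { intros e N He. destruct (H e N He) as [t [Ht1 Ht2]]. exists t; auto. }
  exists s. split; auto. split; [|split]; apply nvcv; intros j; apply Hs2. Qed.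

Lemma sub_accum {n m} (x : nat -> Vec n) (Lg : nat -> Vec m) a b w s : incr s ->
  ccv (fun j => x (S (s j))) a -> ccv (fun j => x (s j)) b -> ccv (fun j => Lg (s j)) w ->
  is_accum_point x Lg a b w.
Proof. intros Hs H1 H2 H3 e N He.
  destruct (vcv_small _ _ e H1 He) as [N1 HN1].
  destruct (vcv_small _ _ e H2 He) as [N2 HN2].
  destruct (vcv_small _ _ e H3 He) as [N3 HN3].
  set (j := max N (max N1 (max N2 N3))).
  exists (s j). split. pose proof (incr_ge s Hs j). lia.
  split. apply HN1; lia. split. apply HN2; lia. apply HN3; lia. Qed.

Lemma Gbar_lim {n m} (g : Fin.t m -> Vec n -> R) gg (x : nat -> Vec n) (Lg : nat -> Vec m) a b w s i :
  is_gradient (g i) (gg i) -> (forall j : Fin.t n, continuous_fun (fun x => gg i x j)) ->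
  ccv (fun j => x (S (s j))) a -> ccv (fun j => x (s j)) b -> ccv (fun j => Lg (s j)) w ->
  (forall j, Gbar g gg (x (S (s j))) (x (s j)) (Lg (s j)) i <= 0) ->
  Gbar g gg a b w i <= 0.
Proof. intros Hg Hc H1 H2 H3 HG.
  assert (E : forall a b w, Gbar g gg a b w i = g i b + inner (gg i b) (vsub a b) + w i / 2 * inner (vsub a b) (vsub a b)).
  { intros; unfold Gbar; rewrite vnorm_sq; auto. }
  assert (Hgg : ccv (fun j => gg i (x (s j))) (gg i b)).
  { intros p. apply (cont_seq (fun x => gg i x p)); auto. }
  assert (Hd := ccv_sub _ _ _ _ H1 H2).
  assert (L : Un_cv (fun j => Gbar g gg (x (S (s j))) (x (s j)) (Lg (s j)) i) (Gbar g gg a b w i)).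
  { rewrite E. apply (cv_ext (fun j => g i (x (s j)) + inner (gg i (x (s j))) (vsub (x (S (s j))) (x (s j)))
       + Lg (s j) i / 2 * inner (vsub (x (S (s j))) (x (s j))) (vsub (x (S (s j))) (x (s j))))).
    intros; rewrite E; auto.
    apply CV_plus. apply CV_plus. apply (grad_seq (g i) (gg i)); auto.
    apply inner_ccv; auto.
    apply CV_mult. unfold Rdiv. apply CV_mult. apply H3. apply cv_const.
    apply inner_ccv; auto. }
  eapply Rle_cv_lim; [exact HG | exact L | apply cv_const]. Qed.

Theorem mainTheorem4 (n m : nat)
  (f : Vec n -> R) (gf : Vec n -> Vec n) (P1 P2 : Vec n -> R)
  (g : Fin.t m -> Vec n -> R) (gg : Fin.t m -> Vec n -> Vec n)
  (Lipf : R) (Lipg : Fin.t m -> R)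
  (* f continuously differentiable with gradient gf *)
  (Hf : is_gradient f gf) (Hgfc : forall i : Fin.t n, continuous_fun (fun x => gf x i))
  (HP1 : convex_fun P1) (HP1c : continuous_fun P1)
  (HP2 : convex_fun P2) (HP2c : continuous_fun P2)
  (Hfeas : exists x, feasible g x)
  (* Assumption A *)
  (HAi : lipschitz gf Lipf)
  (HAii : forall i, is_gradient (g i) (gg i) /\ lipschitz (gg i) (Lipg i))
  (HAiii : level_bounded f P1 P2 g)
  (* Assumption B *)
  (HBc : forall i (j : Fin.t n), continuous_fun (fun x => gg i x j))
  (HB : MFCQ g gg)
  (* algorithm parameters *)
  (c Lund Lbar tau : R) (x0 : Vec n)
  (Hc : 0 < c) (HL : 0 < Lund < Lbar) (Htau : 1 < tau) (Hx0 : feasible g x0)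
  (x : nat -> Vec n) (Lf : nat -> R) (Lg : nat -> Vec m)
  (Hgen : scp_ls_generated f gf P1 P2 g gg c Lund Lbar tau x0 x Lf Lg) :
  (exists a b w, is_accum_point x Lg a b w) /\
  exists Fstar : R,
    (forall eps, 0 < eps -> exists N, forall t, (N <= t)%nat ->
       exists v, Fbar f P1 P2 g gg (x (S t)) (x t) (Lg t) = Fin v /\ Rabs (v - Fstar) < eps) /\
    (forall a b w, is_accum_point x Lg a b w -> Fbar f P1 P2 g gg a b w = Fin Fstar).
Proof.
  destruct Hgen as [Hx0e Hst].
  set (F0 := fun z => f z + P1 z - P2 z).
  assert (SF := fun t => step_facts f gf P1 P2 g gg Lipg c Lund Lbar tau _ _ _ _ HAii Hc (proj1 HL) Htau (Hst t)).
  assert (HF0 : forall (u : nat -> Vec n) a, ccv u a -> Un_cv (fun j => F0 (u j)) (F0 a)).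
  { intros u a Hu. unfold F0. apply CV_minus. apply CV_plus.
    apply (grad_seq f gf); auto. apply cont_seq; auto. apply cont_seq; auto. }
  assert (Hfe : forall t, feasible g (x t)).
  { induction t. rewrite Hx0e; auto. apply (SF t). }
  assert (Hdec : forall t, F0 (x (S t)) <= F0 (x t)) by (intros t; apply (SF t)).
  assert (Hmono : forall t t', (t <= t')%nat -> F0 (x t') <= F0 (x t)).
  { intros t t' H. induction H. lra. specialize (Hdec m0). lra. }
  assert (HGb : forall t i, Gbar g gg (x (S t)) (x t) (Lg t) i <= 0) by (intros t; apply (SF t)).
  assert (HLb : forall t i, Lund <= Lg t i <= Bnd Lipg Lund Lbar tau) by (intros t; apply (SF t)).
  destruct (HAiii (F0 x0)) as [M HM].
  assert (Hxb : forall t i, Rabs (x t i) <= M).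
  { intros t i. eapply Rle_trans. apply coord_le_vnorm. apply HM; auto.
    fold (F0 (x t)). rewrite <- Hx0e. apply Hmono; lia. }
  assert (HLgb : forall t i, Rabs (Lg t i) <= Bnd Lipg Lund Lbar tau).
  { intros t i. destruct (HLb t i). rewrite Rabs_pos_eq; lra. }
  destruct (BWk n (fun t => x (S t)) M) as [phi1 [a [Hp1 Ha]]]. intros; apply Hxb.
  destruct (BWk n (fun j => x (phi1 j)) M) as [phi2 [b [Hp2 Hb]]]. intros; apply Hxb.
  destruct (BWk m (fun j => Lg (phi1 (phi2 j))) (Bnd Lipg Lund Lbar tau)) as [phi3 [w [Hp3 Hw]]]. intros; apply HLgb.
  set (s := fun j => phi1 (phi2 (phi3 j))).
  assert (Hs : incr s) by (unfold s; apply incr_comp; [auto | apply incr_comp; auto]).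
  assert (Ha' : ccv (fun j => x (S (s j))) a).
  { apply (ccv_subseq (fun t => x (S (phi1 t))) a (fun j => phi2 (phi3 j))); auto. apply incr_comp; auto. }
  assert (Hb' : ccv (fun j => x (s j)) b).
  { apply (ccv_subseq (fun t => x (phi1 (phi2 t))) b phi3); auto. }
  assert (Hu := HF0 _ _ Ha').
  assert (Hlow : forall t, F0 a <= F0 (x t)).
  { intros t. destruct (Rle_or_lt (F0 a) (F0 (x t))) as [|Hlt]; auto. exfalso.
    destruct (Hu (F0 a - F0 (x t))) as [N HN]. lra.
    specialize (HN (max N t) ltac:(lia)). unfold Rdist in HN.
    assert (F0 (x (S (s (max N t)))) <= F0 (x t)).
    { apply Hmono. pose proof (incr_ge s Hs (max N t)). lia. }
    apply Rabs_def2 in HN. lra. }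
  assert (Hfull : Un_cv (fun t => F0 (x t)) (F0 a)).
  { intros e He. destruct (Hu e He) as [N HN]. exists (S (s N)). intros t Ht.
    specialize (HN N (le_n N)). unfold Rdist in *. apply Rabs_def2 in HN.
    specialize (Hmono _ _ Ht). specialize (Hlow t). apply Rabs_def1; lra. }
  split.
  { exists a, b, w. apply (sub_accum x Lg a b w s); auto. }
  exists (F0 a). split.
  - intros e He. destruct (Hfull e He) as [N HN]. exists N. intros t Ht.
    unfold Fbar. destruct (excluded_middle_informative _) as [_|Hn].
    + eexists; split. reflexivity. apply (HN (S t)). lia.
    + exfalso; apply Hn; apply HGb.
  - intros a' b' w' Hacc. destruct (accum_sub x Lg a' b' w' Hacc) as [s' [Hs' [H1 [H2 H3]]]].
    assert (HG : forall i, Gbar g gg a' b' w' i <= 0).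
    { intros i. apply (Gbar_lim g gg x Lg a' b' w' s' i); auto. apply HAii. }
    unfold Fbar. destruct (excluded_middle_informative _) as [_|Hn]; [|contradiction].
    f_equal. fold (F0 a').
    apply (UL_sequence (fun j => F0 (x (S (s' j))))). apply HF0; auto.
    apply (cv_subseq (fun t => F0 (x t)) (F0 a) (fun j => S (s' j))); auto.
    intros j. specialize (Hs' j). lia.
Qed.
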